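(* Let $c,M>0$ and assume that either $\eta>1$ and $a,b>0$, or $\eta=1$ and $b>a>0$. Then there is a constant $C>0$ such that for all real $x,y$ with $0\le x\le My<\infty$, $$\frac{a(1+x)y^2+b(1+x)^\eta y^2}{1+y^2}-\frac{2b(1+x)^\eta y^4}{(1+y^2)^2}+\frac{c(1+x)^\eta y^4}{(1+y^2)^2(1+\log(1+y^2))}\le C.$$ *)

(* Defs.v *)
From Stdlib Require Import Reals.
Open Scope R_scope.

(* The quantity bounded in Lemma 5.1; (1+x)^eta is Rpower (1+x) eta, which is
   the usual real power since 1+x > 0 whenever x >= 0. *)
Definition lhs51 (a b c eta x y : R) : R :=
  (a * (1 + x) * y ^ 2 + b * Rpower (1 + x) eta * y ^ 2) / (1 + y ^ 2)
  - 2 * b * Rpower (1 + x) eta * y ^ 4 / (1 + y ^ 2) ^ 2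
  + c * Rpower (1 + x) eta * y ^ 4
      / ((1 + y ^ 2) ^ 2 * (1 + ln (1 + y ^ 2))).

(* Main.v *)
Require Import Defs.
From Stdlib Require Import Reals Lra.
Open Scope R_scope.

Lemma ln_le' x y : 0 < x -> x <= y -> ln x <= ln y.
Proof.
  intros hx [h|h]. left; apply ln_increasing; auto. subst; lra.
Qed.

Lemma Rdiv_le_0_compat x y : 0 <= x -> 0 < y -> 0 <= x / y.
Proof. intros. unfold Rdiv. apply Rmult_le_pos; [lra|left; apply Rinv_0_lt_compat; lra]. Qed.

Lemma Rdiv_le_1 x y : 0 < y -> x <= y -> x / y <= 1.
Proof. intros.
  apply Rle_trans with (y / y). unfold Rdiv. apply Rmult_le_compat_r; [left; apply Rinv_0_lt_compat; lra|lra].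
  right; field; lra. Qed.

Lemma lhs_eq a b c eta x y :
  lhs51 a b c eta x y =
  a * (1 + x) * (y^2 / (1 + y^2)) + Rpower (1 + x) eta *
   (b * y^2 * (1 - y^2) / (1 + y^2)^2
    + c * (y^2)^2 / ((1 + y^2)^2 * (1 + ln (1 + y^2)))).
Proof.
  unfold lhs51.
  assert (h1 : 0 < 1 + y^2) by nra.
  assert (h2 : 0 <= ln (1 + y^2)) by (rewrite <- ln_1; apply ln_le'; nra).
  field. split; lra.
Qed.

Lemma main_gen a b c M eta d K :
  0 < c -> 0 < M -> 0 < a -> 0 < d -> d < b -> 0 < eta ->
  (forall t, 1 <= t -> a * t - d * Rpower t eta <= K) ->
  exists C : R, 0 < C /\
    forall x y : R, 0 <= x -> x <= M * y -> lhs51 a b c eta x y <= C.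
Proof.
  intros hc hM ha hd hdb heta hK.
  set (k := (b - d) / 2).
  set (eps := k / c).
  set (U1 := exp (1 / eps) - 1).
  set (U2 := (b + 3 * d) / k + 1).
  set (U := Rmax 1 (Rmax U1 U2)).
  set (T := 1 + M * U).
  assert (hk : 0 < k) by (unfold k; lra).
  assert (heps : 0 < eps) by (unfold eps; apply Rdiv_lt_0_compat; lra).
  assert (hU1 : 1 <= U) by (unfold U; apply Rmax_l).
  assert (hUU1 : U1 <= U) by (unfold U; eapply Rle_trans; [apply Rmax_l|apply Rmax_r]).
  assert (hUU2 : U2 <= U) by (unfold U; eapply Rle_trans; [apply Rmax_r|apply Rmax_r]).
  assert (hT : 1 <= T) by (unfold T; nra).
  assert (hPT : 0 < Rpower T eta) by (unfold Rpower; apply exp_pos).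
  exists (1 + Rabs K + a * T + Rpower T eta * (b + c)).
  split. { pose proof (Rabs_pos K). nra. }
  intros x y hx hxy.
  assert (hy : 0 <= y) by nra.
  rewrite lhs_eq.
  set (u := y^2).
  assert (hu : 0 <= u) by (unfold u; nra).
  assert (h1u : 0 < 1 + u) by lra.
  assert (hL : 0 <= ln (1 + u)) by (rewrite <- ln_1; apply ln_le'; lra).
  set (L := ln (1 + u)) in *.
  set (P := Rpower (1 + x) eta).
  assert (hP : 0 < P) by (unfold P, Rpower; apply exp_pos).
  assert (hs0 : 0 <= u / (1 + u)) by (apply Rdiv_le_0_compat; lra).
  assert (hs1 : u / (1 + u) <= 1) by (apply Rdiv_le_1; lra).
  destruct (Rle_lt_dec U u) as [hbig|hsmall].
  -
    assert (hLe : 1 / eps <= L).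
    { unfold L. rewrite <- (ln_exp (1/eps)). apply ln_le'. apply exp_pos.
      unfold U1 in hUU1; lra. }
    assert (hinv : c / (1 + L) <= k).
    { apply Rle_trans with (c * eps).
      - unfold Rdiv. apply Rmult_le_compat_l; [lra|].
        assert (1/eps < 1 + L) by lra.
        replace eps with (/ (1/eps)) by (field; lra).
        left; apply Rinv_lt_contravar; [|lra].
        apply Rmult_lt_0_compat; [apply Rdiv_lt_0_compat|]; lra.
      - unfold eps; right; field; lra. }
    assert (hB : b * u * (1 - u) / (1 + u)^2
       + c * u^2 / ((1 + u)^2 * (1 + L)) <= - d).
    { assert (e : c * u^2 / ((1 + u)^2 * (1 + L)) = (c / (1 + L)) * (u^2 / (1+u)^2))
        by (field; lra).
      rewrite e.
      assert (hq : 0 <= u^2 / (1+u)^2) by (apply Rdiv_le_0_compat; nra).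
      apply Rle_trans with (b * u * (1 - u) / (1 + u)^2 + k * (u^2/(1+u)^2)).
      { apply Rplus_le_compat_l. apply Rmult_le_compat_r; lra. }
      assert (e2 : b * u * (1 - u) / (1 + u)^2 + k * (u^2/(1+u)^2)
                 = (b * u * (1 - u) + k * u^2) / (1+u)^2) by (field; lra).
      rewrite e2.
      apply Rle_trans with (- d * (1+u)^2 / (1+u)^2); [|right; field; lra].
      unfold Rdiv. apply Rmult_le_compat_r.
      { left; apply Rinv_0_lt_compat; nra. }
      assert (hu1 : 1 <= u) by lra.
      assert (hkU : b + 3 * d + k <= k * u).
      { unfold U2 in hUU2.
        assert (k * ((b + 3*d)/k + 1) = b + 3*d + k) by (field; lra).
        nra. }
      unfold k in *. nra. }
    fold u. fold P.
    assert (a * (1 + x) * (u / (1 + u)) <= a * (1 + x)).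
    { rewrite <- (Rmult_1_r (a * (1 + x))) at 2. apply Rmult_le_compat_l; nra. }
    assert (P * (b * u * (1 - u) / (1 + u) ^ 2 + c * u ^ 2 / ((1 + u) ^ 2 * (1 + L))) <= - d * P) by nra.
    pose proof (hK (1 + x) ltac:(lra)). fold P in H1.
    pose proof (Rle_abs K). pose proof (Rabs_pos K).
    assert (0 <= a * T) by nra.
    assert (0 <= Rpower T eta * (b + c)) by nra.
    replace (b * u * (1 - u)) with (b * y ^ 2 * (1 - y ^ 2)) in * by (unfold u; ring).
    lra.
  -
    assert (hyU : y <= U) by (destruct (Rle_lt_dec y 1); [lra| unfold u in hsmall; nra]).
    assert (hxT : 1 + x <= T) by (unfold T; nra).
    assert (hPP : P <= Rpower T eta) by (apply Rle_Rpower_l; lra).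
    assert (hB : b * u * (1 - u) / (1 + u)^2
       + c * u^2 / ((1 + u)^2 * (1 + L)) <= b + c).
    { assert (hb : 0 < b) by lra.
      apply Rplus_le_compat.
      - apply Rle_trans with (b * (1+u)^2 / (1+u)^2); [|right; field; lra].
        unfold Rdiv; apply Rmult_le_compat_r; [left; apply Rinv_0_lt_compat; nra|nra].
      - apply Rle_trans with (c * ((1+u)^2 * (1 + L)) / ((1 + u)^2 * (1 + L))); [|right; field; lra].
        unfold Rdiv; apply Rmult_le_compat_r; [left; apply Rinv_0_lt_compat; nra|].
        assert (0 <= u^2 * L) by nra.
        assert (u^2 <= (1+u)^2 * (1+L)) by nra.
        apply Rmult_le_compat_l; lra. }
    fold u. fold P.
    assert (a * (1 + x) * (u / (1 + u)) <= a * T).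
    { apply Rle_trans with (a * (1+x)); [|nra].
      rewrite <- (Rmult_1_r (a * (1 + x))) at 2. apply Rmult_le_compat_l; nra. }
    set (B := b * u * (1 - u) / (1 + u) ^ 2 + c * u ^ 2 / ((1 + u) ^ 2 * (1 + L))) in *.
    assert (P * B <= Rpower T eta * (b + c)).
    { apply Rle_trans with (P * (b + c)). apply Rmult_le_compat_l; lra.
      apply Rmult_le_compat_r; lra. }
    pose proof (Rabs_pos K).
    replace (b * y ^ 2 * (1 - y ^ 2)) with (b * u * (1 - u)) by (unfold u; ring).
    fold B. lra.
Qed.

Theorem lemma5p1 (a b c M eta : R) (hc : 0 < c) (hM : 0 < M)
  (hpar : (1 < eta /\ 0 < a /\ 0 < b) \/ (eta = 1 /\ 0 < a /\ a < b)) :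
  exists C : R, 0 < C /\
    forall x y : R, 0 <= x -> x <= M * y -> lhs51 a b c eta x y <= C.
Proof.
  destruct hpar as [[he [ha hb]] | [he [ha hab]]].
  - apply (main_gen a b c M eta (b/2) (a * exp (a / ((b/2) * (eta - 1))))); try lra.
    intros t ht.
    assert (hlt : 0 <= ln t) by (rewrite <- ln_1; apply ln_le'; lra).
    assert (hP : t * (1 + (eta - 1) * ln t) <= Rpower t eta).
    { unfold Rpower.
      replace (eta * ln t) with (ln t + (eta - 1) * ln t) by ring.
      rewrite exp_plus, exp_ln by lra.
      apply Rmult_le_compat_l; [lra|apply exp_ineq1_le]. }
    set (q := a / ((b/2) * (eta - 1))).
    assert (hq : 0 < q) by (unfold q; apply Rdiv_lt_0_compat; nra).
    assert (heq : (b/2) * (eta - 1) * q = a) by (unfold q; field; lra).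
    destruct (Rle_lt_dec q (ln t)) as [h|h].
    + pose proof (exp_pos q).
      assert (h3 : (b/2) * (eta - 1) * q <= (b/2) * (eta - 1) * ln t).
      { apply Rmult_le_compat_l; nra. }
      assert (h4 : a * t <= t * ((b/2) * (eta - 1) * ln t)) by nra.
      assert (h5 : (b/2) * (t * (1 + (eta - 1) * ln t)) <= (b/2) * Rpower t eta)
        by (apply Rmult_le_compat_l; lra).
      nra.
    + assert (t < exp q) by (rewrite <- (exp_ln t) by lra; apply exp_increasing; lra).
      assert (0 < Rpower t eta) by (unfold Rpower; apply exp_pos). nra.
  - subst eta. apply (main_gen a b c M 1 ((a + b)/2) 0); try lra.
    intros t ht. rewrite Rpower_1 by lra. nra.
Qed.
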